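(* Let $\widetilde{E(2)}$, $\Omega$ and the functions below be as in the context, and let $(c,\theta)\in\Omega$. Define $X=(x_1,x_2,x_3):\mathbb{C}\to\widetilde{E(2)}$ by $$x_3(u+iv)=-\lambda_1\lambda_2Dv+\lambda_1\lambda_2G(u),$$ $$x_1(u+iv)=-\frac{1}{(c^2+\lambda_1^2\lambda_2^2D^2)B}\Big[\tfrac{1}{\lambda_1}f'(u)\cos\varphi(u)M_1-\tfrac{1}{\lambda_1}(c-\varphi'(u))\sin\varphi(u)M_2-\tfrac{1}{\lambda_2}(c-\varphi'(u))\cos\varphi(u)M_3-\tfrac{1}{\lambda_2}f'(u)\sin\varphi(u)M_4\Big],$$ $$x_2(u+iv)=-\frac{1}{(c^2+\lambda_1^2\lambda_2^2D^2)B}\Big[\tfrac{1}{\lambda_1}f'(u)\cos\varphi(u)M_4-\tfrac{1}{\lambda_1}(c-\varphi'(u))\sin\varphi(u)M_3+\tfrac{1}{\lambda_2}(c-\varphi'(u))\cos\varphi(u)M_2+\tfrac{1}{\lambda_2}f'(u)\sin\varphi(u)M_1\Big],$$ where $B=B(u)$, $A=f(u)+cv$, $x_3=x_3(u+iv)$ and $M_1=c\cos x_3\cosh A-\lambda_1\lambda_2D\sin x_3\sinh A$, $M_2=c\cos x_3\sinh A-\lambda_1\lambda_2D\sin x_3\cosh A$, $M_3=c\sin x_3\sinh A+\lambda_1\lambda_2D\cos x_3\cosh A$, $M_4=c\sin x_3\cosh A+\lambda_1\lambda_2D\cos x_3\sinh A$. Then $X$ is a conformal minimal immersion from $\mathbb{C}$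 into $\widetilde{E(2)}$ whose Gauss map (for a suitable choice of unit normal) is $g(u+iv)=e^{f(u)+cv}e^{i\varphi(u)}$.
   Context: $\widetilde{E(2)}$ is $\mathbb{R}^3$ with coordinates $(x_1,x_2,x_3)$ and group law $(a_1,b_1,c_1)*(a_2,b_2,c_2)=(a_1+a_2\cos c_1-b_2\sin c_1,\ b_1+a_2\sin c_1+b_2\cos c_1,\ c_1+c_2)$, with the left-invariant metric $\lambda_1^2(\cos x_3\,dx_1+\sin x_3\,dx_2)^2+\lambda_2^2(-\sin x_3\,dx_1+\cos x_3\,dx_2)^2+\frac{1}{\lambda_1^2\lambda_2^2}dx_3^2$, where either $\lambda_1>\lambda_2>0$ or $\lambda_1=\lambda_2=1$. Its left-invariant orthonormal frame is $E_1=\frac{1}{\lambda_1}(\cos x_3\partial_{x_1}+\sin x_3\partial_{x_2})$, $E_2=\frac{1}{\lambda_2}(-\sin x_3\partial_{x_1}+\cos x_3\partial_{x_2})$, $E_3=\lambda_1\lambda_2\partial_{x_3}$; for an immersed surface with unit normal $N=N_1E_1+N_2E_2+N_3E_3$ the Gauss map is $g=\frac{N_1+iN_2}{1+N_3}$. For $c>0$ set $\theta_c^+=\pi$ if $c>\sqrt2\lambda_1$ and $\theta_c^+=\arccos(1-c^2/\lambda_1^2)\in(0,\pi]$ if $0<c\le\sqrt2\lambda_1$; $\Omega=\{(c,\theta)\in\mathbb{R}^2: c>0,\ \theta\in(-\theta_c^+,\theta_c^+)\}$. For $(c,\theta)\in\Omega$ let $D=\sin\theta/c$, let $\varphi:\mathbb{R}\to\mathbb{R}$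 be the (globally defined) solution of $\varphi'(u)=\sqrt{c^2+2\cos\theta\,B(u)-D^2B(u)^2}$, $\varphi(0)=0$, where $B(u)=\lambda_1^2\cos^2\varphi(u)+\lambda_2^2\sin^2\varphi(u)$; let $f$ be the solution of $f'(u)=DB(u)$, $f(0)=0$; and let $G(u)=\int_0^u\frac{c-\varphi'(s)}{B(s)}\,ds$. *)

(* Defs.v *)
From Stdlib Require Import Reals Ratan List.
From Coquelicot Require Import Coquelicot.
Open Scope R_scope.

(** Points / tangent vectors of R^3 in the coordinates (x_1,x_2,x_3) are
    functions [nat -> R]; index 0,1,2 stands for x_1,x_2,x_3. *)
Definition vec3 := nat -> R.
Definition sum3 (F : nat -> R) : R := F 0%nat + F 1%nat + F 2%nat.
Definition mk3 (a b c : R) : vec3 :=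
  fun k => match k with 0%nat => a | 1%nat => b | _ => c end.
Definition upd (x : vec3) (k : nat) (t : R) : vec3 :=
  fun m => if Nat.eqb m k then t else x m.

(** Coefficients of the 1-forms  w1 = cos x3 dx1 + sin x3 dx2,
    w2 = - sin x3 dx1 + cos x3 dx2,  w3 = dx3. *)
Definition om1 (x : vec3) : vec3 := mk3 (cos (x 2%nat)) (sin (x 2%nat)) 0.
Definition om2 (x : vec3) : vec3 := mk3 (- sin (x 2%nat)) (cos (x 2%nat)) 0.
Definition om3 (x : vec3) : vec3 := mk3 0 0 1.

Definition gE2 (l1 l2 : R) (x : vec3) (i j : nat) : R :=
  l1 ^ 2 * om1 x i * om1 x j + l2 ^ 2 * om2 x i * om2 x j
  + / (l1 ^ 2 * l2 ^ 2) * om3 x i * om3 x j.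

Definition E1 (l1 l2 : R) (x : vec3) : vec3 :=
  mk3 (/ l1 * cos (x 2%nat)) (/ l1 * sin (x 2%nat)) 0.
Definition E2 (l1 l2 : R) (x : vec3) : vec3 :=
  mk3 (- (/ l2 * sin (x 2%nat))) (/ l2 * cos (x 2%nat)) 0.
Definition E3 (l1 l2 : R) (x : vec3) : vec3 := mk3 0 0 (l1 * l2).
Definition frame_comb (l1 l2 : R) (x : vec3) (N : vec3) : vec3 :=
  fun k => N 0%nat * E1 l1 l2 x k + N 1%nat * E2 l1 l2 x k + N 2%nat * E3 l1 l2 x k.

Definition metric := vec3 -> nat -> nat -> R.

Definition ip (g : metric) (x a b : vec3) : R :=
  sum3 (fun i => sum3 (fun j => g x i j * a i * b j)).

Definition dmetric (g : metric) (x : vec3) (k i j : nat) : R :=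
  Derive (fun t => g (upd x k t) i j) (x k).

(** Christoffel symbols of the first kind  Gamma_{ij,l} = g(nabla_{d_i} d_j, d_l) *)
Definition christ1 (g : metric) (x : vec3) (i j l : nat) : R :=
  / 2 * (dmetric g x i j l + dmetric g x j i l - dmetric g x l i j).

Definition surf := R -> R -> vec3.

Definition pu (h : R -> R -> R) : R -> R -> R := fun u v => Derive (fun t => h t v) u.
Definition pv (h : R -> R -> R) : R -> R -> R := fun u v => Derive (fun t => h u t) v.

Definition comp (X : surf) (k : nat) : R -> R -> R := fun u v => X u v k.
Definition Xu (X : surf) (u v : R) : vec3 := fun k => pu (comp X k) u v.
Definition Xv (X : surf) (u v : R) : vec3 := fun k => pv (comp X k) u v.
Definition Xuu (X : surf) (u v : R) : vec3 := fun k => pu (pu (comp X k)) u v.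
Definition Xuv (X : surf) (u v : R) : vec3 := fun k => pv (pu (comp X k)) u v.
Definition Xvv (X : surf) (u v : R) : vec3 := fun k => pv (pv (comp X k)) u v.

Fixpoint iterp (w : list bool) (h : R -> R -> R) : R -> R -> R :=
  match w with
  | nil => h
  | b :: w' => (if b then pu else pv) (iterp w' h)
  end.
Definition smooth2 (h : R -> R -> R) : Prop :=
  forall (w : list bool) (u v : R),
    ex_derive (fun t => iterp w h t v) u /\
    ex_derive (fun t => iterp w h u t) v /\
    continuous (fun p : R * R => iterp w h (fst p) (snd p)) (u, v).

Definition immersion (X : surf) : Prop :=
  (forall k, (k < 3)%nat -> smooth2 (comp X k)) /\
  forall u v a b, (forall k, (k < 3)%nat -> a * Xu X u v k + b * Xv X u v k = 0) ->
    a = 0 /\ b = 0.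

Definition EE (g : metric) X u v := ip g (X u v) (Xu X u v) (Xu X u v).
Definition FF (g : metric) X u v := ip g (X u v) (Xu X u v) (Xv X u v).
Definition GG (g : metric) X u v := ip g (X u v) (Xv X u v) (Xv X u v).

Definition conformal (g : metric) (X : surf) : Prop :=
  forall u v, EE g X u v = GG g X u v /\ FF g X u v = 0.

Definition unit_normal (g : metric) (X : surf) (u v : R) (n : vec3) : Prop :=
  ip g (X u v) n n = 1 /\ ip g (X u v) n (Xu X u v) = 0 /\ ip g (X u v) n (Xv X u v) = 0.

(** g(nabla_{X_s} X_t, n), where S = d^2 X / ds dt, Ys = X_s, Yt = X_t :
    (nabla_{X_s} X_t)^k = S^k + Gamma^k_{ij} Ys^i Yt^j. *)
Definition cov_pair (g : metric) (x S Ys Yt n : vec3) : R :=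
  ip g x S n +
  sum3 (fun i => sum3 (fun j => sum3 (fun l => christ1 g x i j l * Ys i * Yt j * n l))).

Definition IIe g X u v n := cov_pair g (X u v) (Xuu X u v) (Xu X u v) (Xu X u v) n.
Definition IIf g X u v n := cov_pair g (X u v) (Xuv X u v) (Xu X u v) (Xv X u v) n.
Definition IIg g X u v n := cov_pair g (X u v) (Xvv X u v) (Xv X u v) (Xv X u v) n.

Definition mean_curv (g : metric) (X : surf) (u v : R) (n : vec3) : R :=
  (IIe g X u v n * GG g X u v - 2 * IIf g X u v n * FF g X u v + IIg g X u v n * EE g X u v)
  / (2 * (EE g X u v * GG g X u v - FF g X u v ^ 2)).

Definition minimal (g : metric) (X : surf) : Prop :=
  forall u v n, unit_normal g X u v n -> mean_curv g X u v n = 0.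

Definition theta_plus (l1 c : R) : R :=
  if Rlt_dec (sqrt 2 * l1) c then PI else acos (1 - c ^ 2 / l1 ^ 2).

Definition in_Omega (l1 c th : R) : Prop :=
  0 < c /\ - theta_plus l1 c < th < theta_plus l1 c.

Definition DD (c th : R) : R := sin th / c.

Definition BB (l1 l2 : R) (phi : R -> R) (u : R) : R :=
  l1 ^ 2 * cos (phi u) ^ 2 + l2 ^ 2 * sin (phi u) ^ 2.

Definition GGf (l1 l2 c : R) (phi : R -> R) (u : R) : R :=
  RInt (fun s => (c - Derive phi s) / BB l1 l2 phi s) 0 u.

Definition Xsurf (l1 l2 c th : R) (phi f : R -> R) : surf :=
  fun u v =>
  let D := DD c th in
  let K := l1 * l2 in
  let B := BB l1 l2 phi u in
  let x3 := - K * D * v + K * GGf l1 l2 c phi u in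
  let A := f u + c * v in
  let M1 := c * cos x3 * cosh A - K * D * sin x3 * sinh A in
  let M2 := c * cos x3 * sinh A - K * D * sin x3 * cosh A in
  let M3 := c * sin x3 * sinh A + K * D * cos x3 * cosh A in
  let M4 := c * sin x3 * cosh A + K * D * cos x3 * sinh A in
  let f' := Derive f u in
  let p' := Derive phi u in
  let pref := - / ((c ^ 2 + K ^ 2 * D ^ 2) * B) in
  let x1 := pref *
     (/ l1 * f' * cos (phi u) * M1 - / l1 * (c - p') * sin (phi u) * M2
      - / l2 * (c - p') * cos (phi u) * M3 - / l2 * f' * sin (phi u) * M4) in
  let x2 := pref *
     (/ l1 * f' * cos (phi u) * M4 - / l1 * (c - p') * sin (phi u) * M3
      + / l2 * (c - p') * cos (phi u) * M2 + / l2 * f' * sin (phi u) * M1) in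
  mk3 x1 x2 x3.

(* Main.v *)
Require Import Defs.
From Stdlib Require Import Reals Ratan List Lra Nsatz FunctionalExtensionality.
From Coquelicot Require Import Coquelicot.
Open Scope R_scope.

Lemma cplx x y z r cp sp : z <> 0 -> x = z * r * cp -> y = z * r * sp ->
  ((RtoC x + RtoC y * Ci) / RtoC z = RtoC r * (RtoC cp + RtoC sp * Ci))%C.
Proof.
  intros Hz Hx Hy. subst.
  unfold Cdiv, Cmult, Cinv, Cplus, RtoC, Ci. simpl.
  f_equal; field; auto.
Qed.

Lemma circ_param cp sp : cp^2 + sp^2 = 1 ->
  exists p q, p^2+q^2 <> 0 /\ cp = (p^2-q^2)/(p^2+q^2) /\ sp = 2*p*q/(p^2+q^2).
Proof.
  intros H. destruct (Req_dec cp (-1)) as [E|E].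
  - subst. assert (sp = 0) by nra. subst. exists 0, 1. split; [lra|split; field].
  - exists (1+cp), sp.
    assert (Hd : (1+cp)^2 + sp^2 = 2*(1+cp)) by nra.
    assert (1 + cp <> 0) by lra.
    rewrite Hd. split; [lra|split].
    + replace ((1+cp)^2 - sp^2) with (2*cp*(1+cp)) by nra. field. lra.
    + field. lra.
Qed.

Section Main.
Variables l1 l2 c th : R.
Variables phi f : R -> R.
Hypothesis Hl1 : 0 < l1.
Hypothesis Hl2 : 0 < l2.
Hypothesis Hl12 : l2 <= l1.
Hypothesis Hc : 0 < c.
Hypothesis Hct : l1^2 * (1 - cos th) < c^2.
Hypothesis Hphi : forall u, is_derive phi u
  (sqrt (c ^ 2 + 2 * cos th * BB l1 l2 phi u - DD c th ^ 2 * BB l1 l2 phi u ^ 2)).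
Hypothesis Hf : forall u, is_derive f u (DD c th * BB l1 l2 phi u).

Definition Bof (cp sp : R) := l1^2*cp^2 + l2^2*sp^2.
Definition cpf u := cos (phi u).
Definition spf u := sin (phi u).
Definition Rad (B : R) := c ^ 2 + 2 * cos th * B - DD c th ^ 2 * B ^ 2.
Definition ppf u := sqrt (c ^ 2 + 2 * cos th * BB l1 l2 phi u - DD c th ^ 2 * BB l1 l2 phi u ^ 2).
Definition sf u := (c - ppf u) / BB l1 l2 phi u.
Definition ef u v := exp (f u + c * v).

Lemma BB_eq u : BB l1 l2 phi u = Bof (cpf u) (spf u).
Proof. reflexivity. Qed.

Lemma circ u : cpf u ^ 2 + spf u ^ 2 = 1.
Proof. unfold cpf, spf. rewrite <- (sin2_cos2 (phi u)). unfold Rsqr. ring. Qed.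

Lemma Bof_bounds cp sp : cp^2 + sp^2 = 1 -> l2^2 <= Bof cp sp <= l1^2.
Proof.
  intros H. unfold Bof. assert (l2^2 <= l1^2) by nra. split; nra.
Qed.

Lemma BB_bounds u : l2^2 <= BB l1 l2 phi u <= l1^2.
Proof. rewrite BB_eq. apply Bof_bounds, circ. Qed.

Lemma BB_pos u : 0 < BB l1 l2 phi u.
Proof. pose proof (BB_bounds u). nra. Qed.

Lemma Rad_pos B : l2^2 <= B <= l1^2 -> 0 < Rad B.
Proof.
  intros [HB1 HB2]. unfold Rad, DD.
  assert (Hs : sin th ^2 + cos th ^2 = 1) by (rewrite <- (sin2_cos2 th); unfold Rsqr; ring).
  assert (HB : 0 < B) by nra.
  assert (Hct1 : cos th <= 1) by apply COS_bound.
  assert (B * (1 - cos th) <= l1^2 * (1 - cos th)) by nra.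
  assert (Hm : B < c^2 + cos th * B) by nra.
  assert (Hmain : c^2 * (c ^ 2 + 2 * cos th * B - (sin th / c) ^ 2 * B ^ 2) = (c^2 + cos th * B)^2 - B^2).
  { field_simplify; [|lra]. replace (sin th ^2) with (1 - cos th^2) by lra. ring. }
  assert (0 < (c^2 + cos th * B)^2 - B^2) by nra.
  assert (0 < c^2) by nra. nra.
Qed.

Lemma Rad_BB u : 0 < c ^ 2 + 2 * cos th * BB l1 l2 phi u - DD c th ^ 2 * BB l1 l2 phi u ^ 2.
Proof. apply (Rad_pos (BB l1 l2 phi u)), BB_bounds. Qed.

Lemma ppf_pos u : 0 < ppf u.
Proof. unfold ppf. apply sqrt_lt_R0, Rad_BB. Qed.

Lemma ppf_sq u : ppf u ^ 2 = c ^ 2 + 2 * cos th * BB l1 l2 phi u - DD c th ^ 2 * BB l1 l2 phi u ^ 2.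
Proof. unfold ppf. rewrite <- Rsqr_pow2. apply Rsqr_sqrt. left; apply Rad_BB. Qed.

Lemma ppf_eq u : ppf u = c - sf u * Bof (cpf u) (spf u).
Proof. unfold sf. rewrite <- BB_eq. field. apply Rgt_not_eq, BB_pos. Qed.

Lemma ef_pos u v : 0 < ef u v.
Proof. apply exp_pos. Qed.

Lemma dphi u : is_derive phi u (ppf u).
Proof. apply Hphi. Qed.

Lemma Derive_phi u : Derive phi u = ppf u.
Proof. apply is_derive_unique, dphi. Qed.
Lemma Derive_phi' u : Derive (fun x => phi x) u = ppf u.
Proof. apply is_derive_unique, dphi. Qed.
Ltac canon_sqrt t :=
  repeat match goal with |- context [sqrt ?x] =>
     tryif constr_eq x t then fail else replace x with t by ring end.
Ltac side u := repeat split; try (apply (ex_intro _ _ (dphi u)));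
  try (match goal with H : 0 < _ |- 0 < _ => apply (Rlt_le_trans _ _ _ H); right; ring end);
  try (match goal with H : 0 < _ |- _ <> 0 => apply Rgt_not_eq; apply (Rlt_le_trans _ _ _ H); right; ring end).


Lemma dcpf u : is_derive cpf u (- spf u * (c - sf u * Bof (cpf u) (spf u))).
Proof.
  rewrite <- ppf_eq. unfold cpf, spf.
  auto_derive. apply (ex_intro _ _ (dphi u)).
  rewrite Derive_phi. ring.
Qed.

Ltac circ_subst u :=
  let Hc := fresh "Hc" in pose proof (circ u) as Hc; unfold cpf, spf in *;
  let cp := fresh "cp" in let sp := fresh "sp" in
  set (cp := cos (phi u)) in *; set (sp := sin (phi u)) in *; clearbody cp sp;
  let p := fresh "p" in let q := fresh "q" in let Hpq := fresh "Hpq" in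
  let E1 := fresh "E" in let E2 := fresh "E" in
  destruct (circ_param cp sp Hc) as (p & q & Hpq & E1 & E2); subst cp sp.

Lemma Bparam_pos p q : p^2+q^2 <> 0 -> 0 < l2^2*(p^2+q^2)^2 + (l1^2-l2^2)*(p^2-q^2)^2.
Proof.
  intros H. assert (Hn : 0 <= p^2+q^2) by nra. destruct Hn as [Hn|Hn]; [|exfalso; apply H; lra].
  assert (0 < l2^2) by (apply pow_lt; lra).
  assert (l2*l2 <= l1*l1) by (apply Rmult_le_compat; lra).
  assert (0 <= l1^2-l2^2) by (simpl; lra).
  assert (0 <= (p^2-q^2)^2) by (apply pow2_ge_0). assert (0 < (p^2+q^2)^2) by (apply pow_lt; lra).
  assert (0 < l2^2*(p^2+q^2)^2) by (apply Rmult_lt_0_compat; lra).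
  assert (0 <= (l1^2-l2^2)*(p^2-q^2)^2) by (apply Rmult_le_pos; lra). lra.
Qed.

Ltac nz1 := match goal with
  | H : ?x <> 0 |- ?x <> 0 => exact H
  | |- ?x ^ _ <> 0 => apply pow_nonzero; nz1
  | |- ?x * ?y <> 0 => apply Rmult_integral_contrapositive_currified; nz1
  | |- l1 <> 0 => apply Rgt_not_eq; exact Hl1
  | |- l2 <> 0 => apply Rgt_not_eq; exact Hl2
  | |- c <> 0 => apply Rgt_not_eq; exact Hc
  | |- 2 <> 0 => apply Rgt_not_eq; lra
  | Hpq : ?p^2+?q^2 <> 0 |- ?X <> 0 =>
      replace X with (l2^2*(p^2+q^2)^2 + (l1^2-l2^2)*(p^2-q^2)^2) by ring;
      apply Rgt_not_eq, Bparam_pos, Hpq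
  | |- ?e * ?e + 1 <> 0 => apply Rgt_not_eq; nra
  | _ => idtac
  end.
Ltac nz := repeat split; nz1.

Lemma dspf u : is_derive spf u (cpf u * (c - sf u * Bof (cpf u) (spf u))).
Proof.
  rewrite <- ppf_eq. unfold cpf, spf.
  auto_derive. apply (ex_intro _ _ (dphi u)).
  rewrite Derive_phi. ring.
Qed.

Lemma dppf u : is_derive ppf u ((cos th - DD c th ^ 2 * Bof (cpf u) (spf u)) *
   (2 * (l2^2 - l1^2) * spf u * cpf u)).
Proof.
  pose proof (Rad_BB u) as HR. pose proof (ppf_pos u) as HP.
  unfold ppf in *. unfold BB in *. unfold cpf, spf, Bof.
  auto_derive.
  - side u.
  - rewrite ?Derive_phi, ?Derive_phi'. unfold ppf, BB.
    canon_sqrt (c ^ 2 + 2 * cos th * (l1 ^ 2 * cos (phi u) ^ 2 + l2 ^ 2 * sin (phi u) ^ 2) -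
        DD c th ^ 2 * (l1 ^ 2 * cos (phi u) ^ 2 + l2 ^ 2 * sin (phi u) ^ 2) ^ 2).
    field. lra.
Qed.

Lemma Derive_ppf u : Derive ppf u = (cos th - DD c th ^ 2 * Bof (cpf u) (spf u)) *
   (2 * (l2^2 - l1^2) * spf u * cpf u).
Proof. apply is_derive_unique, dppf. Qed.

Lemma dsf u : is_derive sf u ((l2^2 - l1^2) * spf u * cpf u * (sf u ^ 2 + DD c th ^ 2)).
Proof.
  pose proof (BB_pos u) as HB. pose proof (ppf_sq u) as HS. pose proof (ppf_pos u) as HP.
  unfold sf. unfold BB in *.
  auto_derive.
  - side u; try (apply (ex_intro _ _ (dppf u))).
  - rewrite ?Derive_phi, ?Derive_phi', Derive_ppf.
    assert (Ect : cos th = (ppf u ^ 2 - c^2 + DD c th ^ 2 * Bof (cpf u) (spf u) ^ 2) / (2 * Bof (cpf u) (spf u))).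
    { unfold Bof, cpf, spf. rewrite HS. field. lra. }
    rewrite Ect. rewrite ppf_eq. 
    generalize (sf u); intro s.
    unfold Bof in *. circ_subst u.
    field. nz.
Qed.

Lemma Derive_sf u : Derive sf u = (l2^2 - l1^2) * spf u * cpf u * (sf u ^ 2 + DD c th ^ 2).
Proof. apply is_derive_unique, dsf. Qed.
Lemma Derive_cpf u : Derive cpf u = - spf u * (c - sf u * Bof (cpf u) (spf u)).
Proof. apply is_derive_unique, dcpf. Qed.
Lemma Derive_spf u : Derive spf u = cpf u * (c - sf u * Bof (cpf u) (spf u)).
Proof. apply is_derive_unique, dspf. Qed.

Lemma sf_cont u : continuous sf u.
Proof. apply (ex_derive_continuous sf u). exists (Derive sf u). rewrite Derive_sf. apply dsf. Qed.

Definition Gf u := GGf l1 l2 c phi u.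

Lemma Gf_eq : Gf = fun u => RInt sf 0 u.
Proof.
  apply functional_extensionality; intro u. unfold Gf, GGf. apply RInt_ext.
  intros x _. rewrite Derive_phi. reflexivity.
Qed.

Lemma dGf u : is_derive Gf u (sf u).
Proof.
  rewrite Gf_eq. apply (is_derive_RInt sf (fun b => RInt sf 0 b) 0 u).
  - apply filter_forall. intro b. apply (RInt_correct (V:=R_CompleteNormedModule)). apply (ex_RInt_continuous (V:=R_CompleteNormedModule)).
    intros; apply sf_cont.
  - apply sf_cont.
Qed.
Lemma Derive_Gf u : Derive Gf u = sf u.
Proof. apply is_derive_unique, dGf. Qed.

Lemma def_u u v : is_derive (fun t => ef t v) u (ef u v * (DD c th * Bof (cpf u) (spf u))).
Proof.
  unfold ef. auto_derive. exists (DD c th * BB l1 l2 phi u). apply Hf.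
  replace (Derive (fun x => f x) u) with (DD c th * BB l1 l2 phi u) by (symmetry; apply is_derive_unique, Hf). rewrite BB_eq. ring.
Qed.
Lemma def_v u v : is_derive (fun t => ef u t) v (ef u v * c).
Proof. unfold ef. auto_derive. auto. ring. Qed.
Lemma Derive_efu u v : Derive (fun t => ef t v) u = ef u v * (DD c th * Bof (cpf u) (spf u)).
Proof. apply is_derive_unique, def_u. Qed.
Lemma Derive_efv u v : Derive (fun t => ef u t) v = ef u v * c.
Proof. apply is_derive_unique, def_v. Qed.

Lemma Derive_cpf' u : Derive (fun x => cpf x) u = - spf u * (c - sf u * Bof (cpf u) (spf u)).
Proof. apply is_derive_unique, dcpf. Qed.
Lemma Derive_spf' u : Derive (fun x => spf x) u = cpf u * (c - sf u * Bof (cpf u) (spf u)).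
Proof. apply is_derive_unique, dspf. Qed.
Lemma Derive_sf' u : Derive (fun x => sf x) u = (l2^2 - l1^2) * spf u * cpf u * (sf u ^ 2 + DD c th ^ 2).
Proof. apply is_derive_unique, dsf. Qed.
Ltac rwD := rewrite ?Derive_cpf, ?Derive_cpf', ?Derive_spf, ?Derive_spf', ?Derive_sf, ?Derive_sf',
   ?Derive_efu, ?Derive_efv, ?Derive_Gf.

Definition chE (e : R) := (e + /e)/2.
Definition shE (e : R) := (e - /e)/2.
Definition KK := l1 * l2.
Definition Lam := c^2 + KK^2 * DD c th ^2.

Lemma Lam_pos : 0 < Lam.
Proof. unfold Lam. assert (0 < c^2) by (apply pow_lt; lra). assert (0 <= KK^2 * DD c th^2) by (rewrite <- Rpow_mult_distr; apply pow2_ge_0). lra. Qed.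

Definition FV1 cp sp e s :=
  DD c th * Bof cp sp * cp * c * chE e / l1 - (s * Bof cp sp) * sp * c * shE e / l1
  - (s * Bof cp sp) * cp * KK * DD c th * chE e / l2 - DD c th * Bof cp sp * sp * KK * DD c th * shE e / l2.
Definition FV2 cp sp e s :=
  DD c th * Bof cp sp * cp * KK * DD c th * shE e / l1 - (s * Bof cp sp) * sp * KK * DD c th * chE e / l1
  + (s * Bof cp sp) * cp * c * shE e / l2 + DD c th * Bof cp sp * sp * c * chE e / l2.
Definition FW1 cp sp e s := - FV1 cp sp e s / (Lam * Bof cp sp).
Definition FW2 cp sp e s := - FV2 cp sp e s / (Lam * Bof cp sp).
Definition Fa1 cp sp e s := DD c th * sp * chE e + s * cp * shE e.
Definition Fa2 cp sp e s := - DD c th * cp * chE e + s * sp * shE e.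
Definition Fb1 cp sp e s := - DD c th * cp * shE e + s * sp * chE e.
Definition Fb2 cp sp e s := - DD c th * sp * shE e - s * cp * chE e.

Definition W1 u v := FW1 (cpf u) (spf u) (ef u v) (sf u).
Definition W2 u v := FW2 (cpf u) (spf u) (ef u v) (sf u).
Definition a1 u v := Fa1 (cpf u) (spf u) (ef u v) (sf u).
Definition a2 u v := Fa2 (cpf u) (spf u) (ef u v) (sf u).
Definition b1 u v := Fb1 (cpf u) (spf u) (ef u v) (sf u).
Definition b2 u v := Fb2 (cpf u) (spf u) (ef u v) (sf u).

Ltac nz1' := match goal with
  | |- ?X <> 0 => replace X with Lam by (unfold Lam, KK; ring); apply Rgt_not_eq, Lam_pos
  | |- ?X <> 0 => replace X with (c^2 + KK^2 * DD c th ^2) by (unfold KK; ring); apply Rgt_not_eq, Lam_pos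
  | _ => nz1
  end.
Ltac nz' := repeat split; nz1'.

Ltac prep_alg u v :=
  pose proof (ef_pos u v) as Hef; apply Rgt_not_eq in Hef;
  unfold FW1, FW2, FV1, FV2, Fa1, Fa2, Fb1, Fb2, chE, shE, Bof, Lam, KK in *;
  generalize dependent (ef u v); intros e He; generalize dependent (sf u); intros s;
  circ_subst u.

Ltac side_atoms u v := repeat split;
  try apply (ex_intro _ _ (dcpf u)); try apply (ex_intro _ _ (dspf u));
  try apply (ex_intro _ _ (dsf u)); try apply (ex_intro _ _ (def_u u v));
  try apply (ex_intro _ _ (def_v u v)); try apply (ex_intro _ _ (dGf u));
  try (apply Rgt_not_eq, ef_pos);
  try (apply Rmult_integral_contrapositive_currified; [apply Rgt_not_eq, Lam_pos|]);
  try (match goal with HB : 0 < _ |- _ <> 0 => apply Rgt_not_eq; apply (Rlt_le_trans _ _ _ HB); right; unfold Bof; ring end).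

Lemma dW1u u v : is_derive (fun t => W1 t v) u (a1 u v / l1 + KK * sf u * W2 u v).
Proof.
  unfold W1, a1, W2. pose proof (BB_pos u) as HB. rewrite BB_eq in HB.
  unfold FW1, FV1, chE, shE, Bof.
  auto_derive.
  - side_atoms u v.
  - rwD. prep_alg u v. field. nz'.
Qed.

Lemma dW2u u v : is_derive (fun t => W2 t v) u (a2 u v / l2 - KK * sf u * W1 u v).
Proof.
  unfold W1, a2, W2. pose proof (BB_pos u) as HB. rewrite BB_eq in HB.
  unfold FW2, FV2, chE, shE, Bof.
  auto_derive.
  - side_atoms u v.
  - rwD. prep_alg u v. field. nz'.
Qed.

Lemma dW1v u v : is_derive (fun t => W1 u t) v (b1 u v / l1 - KK * DD c th * W2 u v).
Proof.
  unfold W1, b1, W2. pose proof (BB_pos u) as HB. rewrite BB_eq in HB.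
  unfold FW1, FV1, chE, shE, Bof.
  auto_derive.
  - side_atoms u v.
  - rwD. prep_alg u v. field. nz'.
Qed.

Lemma dW2v u v : is_derive (fun t => W2 u t) v (b2 u v / l2 + KK * DD c th * W1 u v).
Proof.
  unfold W1, b2, W2. pose proof (BB_pos u) as HB. rewrite BB_eq in HB.
  unfold FW2, FV2, chE, shE, Bof.
  auto_derive.
  - side_atoms u v.
  - rwD. prep_alg u v. field. nz'.
Qed.

Definition x3f u v := - KK * DD c th * v + KK * Gf u.
Definition Xe : surf := fun u v =>
  mk3 (cos (x3f u v) * W1 u v - sin (x3f u v) * W2 u v)
      (sin (x3f u v) * W1 u v + cos (x3f u v) * W2 u v) (x3f u v).

Ltac nzh := repeat split; try match goal with H : 0 < _ |- _ <> 0 =>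
  apply Rgt_not_eq; apply (Rlt_le_trans _ _ _ H); right; unfold Bof; ring end.

Lemma cosh_chE x : cosh x = chE (exp x).
Proof. unfold cosh, chE. rewrite exp_Ropp. reflexivity. Qed.
Lemma sinh_shE x : sinh x = shE (exp x).
Proof. unfold sinh, shE. rewrite exp_Ropp. reflexivity. Qed.

Lemma Derive_f u : Derive f u = DD c th * BB l1 l2 phi u.
Proof. apply is_derive_unique, Hf. Qed.

Lemma Xsurf_eq : Xsurf l1 l2 c th phi f = Xe.
Proof.
  apply functional_extensionality; intro u. apply functional_extensionality; intro v.
  apply functional_extensionality; intro k.
  unfold Xsurf, Xe. cbv beta zeta.
  rewrite Derive_f, Derive_phi. fold (Gf u).
  rewrite !cosh_chE, !sinh_shE. fold (ef u v). rewrite ppf_eq. rewrite BB_eq.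
  pose proof (BB_pos u) as HB. rewrite BB_eq in HB. pose proof Lam_pos as HL.
  pose proof (ef_pos u v) as He.
  unfold x3f, W1, W2, FW1, FW2, FV1, FV2, Lam, KK, cpf, spf in *.
  destruct k as [|[|k]]; simpl.
  - field. nzh.
  - field. nzh.
  - ring.
Qed.

Definition Ec (th0 w1 w2 w3 : R) : vec3 :=
  mk3 (cos th0 * w1 / l1 - sin th0 * w2 / l2) (sin th0 * w1 / l1 + cos th0 * w2 / l2) (KK * w3).

Lemma dx3u u v : is_derive (fun t => x3f t v) u (KK * sf u).
Proof. unfold x3f. auto_derive. apply (ex_intro _ _ (dGf u)). rwD. ring. Qed.
Lemma dx3v u v : is_derive (fun t => x3f u t) v (- KK * DD c th).
Proof. unfold x3f. auto_derive. auto. ring. Qed.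

Lemma Derive_x3u u v : Derive (fun t => x3f t v) u = KK * sf u.
Proof. apply is_derive_unique, dx3u. Qed.
Lemma Derive_x3v u v : Derive (fun t => x3f u t) v = - KK * DD c th.
Proof. apply is_derive_unique, dx3v. Qed.
Lemma Derive_W1u u v : Derive (fun t => W1 t v) u = a1 u v / l1 + KK * sf u * W2 u v.
Proof. apply is_derive_unique, dW1u. Qed.
Lemma Derive_W2u u v : Derive (fun t => W2 t v) u = a2 u v / l2 - KK * sf u * W1 u v.
Proof. apply is_derive_unique, dW2u. Qed.
Lemma Derive_W1v u v : Derive (fun t => W1 u t) v = b1 u v / l1 - KK * DD c th * W2 u v.
Proof. apply is_derive_unique, dW1v. Qed.
Lemma Derive_W2v u v : Derive (fun t => W2 u t) v = b2 u v / l2 + KK * DD c th * W1 u v.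
Proof. apply is_derive_unique, dW2v. Qed.

Ltac rwD2 := rewrite ?Derive_x3u, ?Derive_x3v, ?Derive_W1u, ?Derive_W2u, ?Derive_W1v, ?Derive_W2v.
Ltac side2 u v := repeat split;
  try apply (ex_intro _ _ (dx3u u v)); try apply (ex_intro _ _ (dx3v u v));
  try apply (ex_intro _ _ (dW1u u v)); try apply (ex_intro _ _ (dW2u u v));
  try apply (ex_intro _ _ (dW1v u v)); try apply (ex_intro _ _ (dW2v u v)).

Lemma Xu_eq u v : Xu Xe u v = Ec (x3f u v) (a1 u v) (a2 u v) (sf u).
Proof.
  apply functional_extensionality; intro k. unfold Xu, pu, Defs.comp, Xe, Ec.
  apply is_derive_unique.
  destruct k as [|[|k]]; simpl; (auto_derive; [side2 u v| rwD2; field; nzh]).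
Qed.

Lemma Xv_eq u v : Xv Xe u v = Ec (x3f u v) (b1 u v) (b2 u v) (- DD c th).
Proof.
  apply functional_extensionality; intro k. unfold Xv, pv, Defs.comp, Xe, Ec.
  apply is_derive_unique.
  destruct k as [|[|k]]; simpl; (auto_derive; [side2 u v| rwD2; field; nzh]).
Qed.

Definition Fds cp sp s := (l2^2 - l1^2) * sp * cp * (s ^ 2 + DD c th ^ 2).
Definition Fa1u cp sp e s :=
  DD c th * (cp * (c - s * Bof cp sp)) * chE e + DD c th * sp * (DD c th * Bof cp sp * shE e)
  + Fds cp sp s * cp * shE e + s * (- sp * (c - s * Bof cp sp)) * shE e
  + s * cp * (DD c th * Bof cp sp * chE e).
Definition Fa2u cp sp e s :=
  - DD c th * (- sp * (c - s * Bof cp sp)) * chE e - DD c th * cp * (DD c th * Bof cp sp * shE e)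
  + Fds cp sp s * sp * shE e + s * (cp * (c - s * Bof cp sp)) * shE e
  + s * sp * (DD c th * Bof cp sp * chE e).
Definition Fb1v cp sp e s := - DD c th * cp * (c * chE e) + s * sp * (c * shE e).
Definition Fb2v cp sp e s := - DD c th * sp * (c * chE e) - s * cp * (c * shE e).

Definition a1u u v := Fa1u (cpf u) (spf u) (ef u v) (sf u).
Definition a2u u v := Fa2u (cpf u) (spf u) (ef u v) (sf u).
Definition a3u u := Fds (cpf u) (spf u) (sf u).
Definition b1v u v := Fb1v (cpf u) (spf u) (ef u v) (sf u).
Definition b2v u v := Fb2v (cpf u) (spf u) (ef u v) (sf u).

Ltac prep_alg2 u v :=
  pose proof (ef_pos u v) as Hef; apply Rgt_not_eq in Hef;
  unfold Fa1u, Fa2u, Fds, Fb1v, Fb2v, FW1, FW2, FV1, FV2, Fa1, Fa2, Fb1, Fb2, chE, shE, Bof, Lam, KK in *;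
  generalize dependent (ef u v); intros e He; generalize dependent (sf u); intros s;
  circ_subst u.

Lemma da1u u v : is_derive (fun t => a1 t v) u (a1u u v).
Proof.
  unfold a1, a1u, Fa1, chE, shE.
  auto_derive; [side_atoms u v| rwD; prep_alg2 u v; field; nz'].
Qed.
Lemma da2u u v : is_derive (fun t => a2 t v) u (a2u u v).
Proof.
  unfold a2, a2u, Fa2, chE, shE.
  auto_derive; [side_atoms u v| rwD; prep_alg2 u v; field; nz'].
Qed.
Lemma db1v u v : is_derive (fun t => b1 u t) v (b1v u v).
Proof.
  unfold b1, b1v, Fb1, chE, shE.
  auto_derive; [side_atoms u v| rwD; prep_alg2 u v; field; nz'].
Qed.
Lemma db2v u v : is_derive (fun t => b2 u t) v (b2v u v).
Proof.
  unfold b2, b2v, Fb2, chE, shE.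
  auto_derive; [side_atoms u v| rwD; prep_alg2 u v; field; nz'].
Qed.

Definition Sfr (th0 w1 w2 d1 d2 d3 ths : R) : vec3 :=
  mk3 (cos th0 * d1 / l1 - sin th0 * d2 / l2 + ths * (- sin th0 * w1 / l1 - cos th0 * w2 / l2))
      (sin th0 * d1 / l1 + cos th0 * d2 / l2 + ths * (cos th0 * w1 / l1 - sin th0 * w2 / l2))
      (KK * d3).

Lemma Derive_a1u u v : Derive (fun t => a1 t v) u = a1u u v.
Proof. apply is_derive_unique, da1u. Qed.
Lemma Derive_a2u u v : Derive (fun t => a2 t v) u = a2u u v.
Proof. apply is_derive_unique, da2u. Qed.
Lemma Derive_b1v u v : Derive (fun t => b1 u t) v = b1v u v.
Proof. apply is_derive_unique, db1v. Qed.
Lemma Derive_b2v u v : Derive (fun t => b2 u t) v = b2v u v.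
Proof. apply is_derive_unique, db2v. Qed.

Lemma Xuu_eq u v : Xuu Xe u v =
  Sfr (x3f u v) (a1 u v) (a2 u v) (a1u u v) (a2u u v) (a3u u) (KK * sf u).
Proof.
  apply functional_extensionality; intro k. unfold Xuu, pu at 1.
  replace (fun t => pu (pu (Defs.comp Xe k)) t v) with (fun t => pu (pu (Defs.comp Xe k)) t v) by reflexivity.
  transitivity (Derive (fun t => Ec (x3f t v) (a1 t v) (a2 t v) (sf t) k) u).
  { f_equal. apply functional_extensionality; intro t. rewrite <- Xu_eq. reflexivity. }
  apply is_derive_unique. unfold Ec, Sfr.
  destruct k as [|[|k]]; simpl; (auto_derive; [repeat split;
    try apply (ex_intro _ _ (dx3u u v)); try apply (ex_intro _ _ (da1u u v));
    try apply (ex_intro _ _ (da2u u v)); try apply (ex_intro _ _ (dsf u))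
   | rewrite ?Derive_x3u, ?Derive_a1u, ?Derive_a2u, ?Derive_sf'; unfold a3u, Fds; field; nzh]).
Qed.

Lemma Xvv_eq u v : Xvv Xe u v =
  Sfr (x3f u v) (b1 u v) (b2 u v) (b1v u v) (b2v u v) 0 (- KK * DD c th).
Proof.
  apply functional_extensionality; intro k. unfold Xvv, pv at 1.
  transitivity (Derive (fun t => Ec (x3f u t) (b1 u t) (b2 u t) (- DD c th) k) v).
  { f_equal. apply functional_extensionality; intro t. rewrite <- Xv_eq. reflexivity. }
  apply is_derive_unique. unfold Ec, Sfr.
  destruct k as [|[|k]]; simpl; (auto_derive; [repeat split;
    try apply (ex_intro _ _ (dx3v u v)); try apply (ex_intro _ _ (db1v u v));
    try apply (ex_intro _ _ (db2v u v))
   | rewrite ?Derive_x3v, ?Derive_b1v, ?Derive_b2v; field; nzh]).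
Qed.

Definition o1 (t : R) (i : nat) := match i with 0%nat => cos t | 1%nat => sin t | _ => 0 end.
Definition o2 (t : R) (i : nat) := match i with 0%nat => - sin t | 1%nat => cos t | _ => 0 end.
Definition o3 (i : nat) := match i with 0%nat => 0 | 1%nat => 0 | _ => 1 end.
Definition do1 (t : R) (i : nat) := match i with 0%nat => - sin t | 1%nat => cos t | _ => 0 end.
Definition do2 (t : R) (i : nat) := match i with 0%nat => - cos t | 1%nat => - sin t | _ => 0 end.
Definition gfun (t : R) (i j : nat) :=
  l1 ^ 2 * o1 t i * o1 t j + l2 ^ 2 * o2 t i * o2 t j + / (l1 ^ 2 * l2 ^ 2) * o3 i * o3 j.
Definition dg (t : R) (i j : nat) :=
  l1 ^ 2 * (do1 t i * o1 t j + o1 t i * do1 t j) + l2 ^ 2 * (do2 t i * o2 t j + o2 t i * do2 t j).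

Lemma gE2_gfun x i j : gE2 l1 l2 x i j = gfun (x 2%nat) i j.
Proof.
  unfold gE2, gfun, om1, om2, om3, mk3, o1, o2, o3.
  destruct i as [|[|i]]; destruct j as [|[|j]]; reflexivity.
Qed.

Lemma dm2 x i j : dmetric (gE2 l1 l2) x 2 i j = dg (x 2%nat) i j.
Proof.
  unfold dmetric. apply is_derive_unique.
  apply (is_derive_ext (fun t => gfun t i j)).
  { intro t. rewrite gE2_gfun. reflexivity. }
  unfold gfun, dg, o1, o2, o3, do1, do2.
  destruct i as [|[|i]]; destruct j as [|[|j]]; auto_derive; auto; ring.
Qed.

Lemma dm_other x k i j : k <> 2%nat -> dmetric (gE2 l1 l2) x k i j = 0.
Proof.
  intro Hk. unfold dmetric. apply is_derive_unique.
  apply (is_derive_ext (fun t => gfun (x 2%nat) i j)).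
  { intro t. rewrite gE2_gfun. unfold upd. destruct k as [|[|[|k]]]; try reflexivity. congruence. }
  apply (is_derive_const (gfun (x 2%nat) i j)).
Qed.
Lemma dm0 x i j : dmetric (gE2 l1 l2) x 0 i j = 0.
Proof. apply dm_other; discriminate. Qed.
Lemma dm1 x i j : dmetric (gE2 l1 l2) x 1 i j = 0.
Proof. apply dm_other; discriminate. Qed.

Definition fr1 (x n : vec3) := l1 * (cos (x 2%nat) * n 0%nat + sin (x 2%nat) * n 1%nat).
Definition fr2 (x n : vec3) := l2 * (- sin (x 2%nat) * n 0%nat + cos (x 2%nat) * n 1%nat).
Definition fr3 (x n : vec3) := n 2%nat / KK.

Lemma ip_fr x Y Z : ip (gE2 l1 l2) x Y Z = fr1 x Y * fr1 x Z + fr2 x Y * fr2 x Z + fr3 x Y * fr3 x Z.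
Proof.
  unfold ip, sum3. rewrite !gE2_gfun. unfold gfun, o1, o2, o3, fr1, fr2, fr3, KK.
  field. split; apply Rgt_not_eq; lra.
Qed.

Lemma circ_t t : cos t ^ 2 + sin t ^ 2 = 1.
Proof. rewrite <- (sin2_cos2 t). unfold Rsqr. ring. Qed.

Ltac circ_th t :=
  let Hc := fresh "Hc" in pose proof (circ_t t) as Hc;
  let cp := fresh "ct" in let sp := fresh "st" in
  set (cp := cos t) in *; set (sp := sin t) in *; clearbody cp sp;
  let p := fresh "p" in let q := fresh "q" in let Hpq := fresh "Hpq" in
  let E1 := fresh "E" in let E2 := fresh "E" in
  destruct (circ_param cp sp Hc) as (p & q & Hpq & E1 & E2); subst cp sp.

Lemma fr_Ec x w1 w2 w3 :
  fr1 x (Ec (x 2%nat) w1 w2 w3) = w1 /\ fr2 x (Ec (x 2%nat) w1 w2 w3) = w2 /\ fr3 x (Ec (x 2%nat) w1 w2 w3) = w3.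
Proof.
  unfold fr1, fr2, fr3, Ec, mk3, KK. circ_th (x 2%nat).
  repeat split; field; repeat split; try assumption; apply Rgt_not_eq; lra.
Qed.

Definition Gam1 (a1 a2 a3 b1 b2 b3 : R) := - ((l2^2 - l1^2)/2) * a2 * b3 - ((l1^2 + l2^2)/2) * a3 * b2.
Definition Gam2 (a1 a2 a3 b1 b2 b3 : R) := - ((l2^2 - l1^2)/2) * a1 * b3 + ((l1^2 + l2^2)/2) * a3 * b1.
Definition Gam3 (a1 a2 a3 b1 b2 b3 : R) := ((l2^2 - l1^2)/2) * (a1 * b2 + a2 * b1).

Lemma cov_frame x a1 a2 a3 b1 b2 b3 d1 d2 d3 n :
  cov_pair (gE2 l1 l2) x (Sfr (x 2%nat) b1 b2 d1 d2 d3 (KK * a3))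
    (Ec (x 2%nat) a1 a2 a3) (Ec (x 2%nat) b1 b2 b3) n =
  (d1 + Gam1 a1 a2 a3 b1 b2 b3) * fr1 x n + (d2 + Gam2 a1 a2 a3 b1 b2 b3) * fr2 x n
  + (d3 + Gam3 a1 a2 a3 b1 b2 b3) * fr3 x n.
Proof.
  unfold cov_pair. rewrite ip_fr.
  unfold sum3, christ1. rewrite !dm0, !dm1, !dm2.
  unfold dg, o1, o2, do1, do2, Sfr, Ec, mk3, fr1, fr2, fr3, Gam1, Gam2, Gam3, KK.
  generalize (n 0%nat) (n 1%nat) (n 2%nat). intros n0 n1 n2.
  circ_th (x 2%nat).
  field. repeat split; try assumption; apply Rgt_not_eq; lra.
Qed.

Lemma alg_EG u v : a1 u v ^ 2 + a2 u v ^ 2 + sf u ^ 2 = b1 u v ^ 2 + b2 u v ^ 2 + (- DD c th) ^ 2.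
Proof. unfold a1, a2, b1, b2. prep_alg2 u v. field. nz'. Qed.
Lemma alg_F u v : a1 u v * b1 u v + a2 u v * b2 u v + sf u * (- DD c th) = 0.
Proof. unfold a1, a2, b1, b2. prep_alg2 u v. field. nz'. Qed.
Lemma alg_E u v : a1 u v ^ 2 + a2 u v ^ 2 + sf u ^ 2 = chE (ef u v) ^ 2 * (DD c th ^ 2 + sf u ^ 2).
Proof. unfold a1, a2, b1, b2. prep_alg2 u v. field. nz'. Qed.

Lemma tau1 u v : a1u u v + b1v u v + Gam1 (a1 u v) (a2 u v) (sf u) (a1 u v) (a2 u v) (sf u)
  + Gam1 (b1 u v) (b2 u v) (- DD c th) (b1 u v) (b2 u v) (- DD c th) = 0.
Proof. unfold a1u, b1v, a1, a2, b1, b2, Gam1. prep_alg2 u v. field. nz'. Qed.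
Lemma tau2 u v : a2u u v + b2v u v + Gam2 (a1 u v) (a2 u v) (sf u) (a1 u v) (a2 u v) (sf u)
  + Gam2 (b1 u v) (b2 u v) (- DD c th) (b1 u v) (b2 u v) (- DD c th) = 0.
Proof. unfold a2u, b2v, a1, a2, b1, b2, Gam2. prep_alg2 u v. field. nz'. Qed.
Lemma tau3 u v : a3u u + 0 + Gam3 (a1 u v) (a2 u v) (sf u) (a1 u v) (a2 u v) (sf u)
  + Gam3 (b1 u v) (b2 u v) (- DD c th) (b1 u v) (b2 u v) (- DD c th) = 0.
Proof. unfold a3u, Fds, a1, a2, b1, b2, Gam3. prep_alg2 u v. field. nz'. Qed.

Lemma EE_val u v : EE (gE2 l1 l2) Xe u v = a1 u v ^ 2 + a2 u v ^ 2 + sf u ^ 2.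
Proof.
  unfold EE. rewrite Xu_eq, ip_fr. change (x3f u v) with (Xe u v 2%nat).
  destruct (fr_Ec (Xe u v) (a1 u v) (a2 u v) (sf u)) as (H1&H2&H3). rewrite H1, H2, H3. ring.
Qed.
Lemma GG_val u v : GG (gE2 l1 l2) Xe u v = b1 u v ^ 2 + b2 u v ^ 2 + (- DD c th) ^ 2.
Proof.
  unfold GG. rewrite Xv_eq, ip_fr. change (x3f u v) with (Xe u v 2%nat).
  destruct (fr_Ec (Xe u v) (b1 u v) (b2 u v) (- DD c th)) as (H1&H2&H3). rewrite H1, H2, H3. ring.
Qed.
Lemma FF_val u v : FF (gE2 l1 l2) Xe u v = a1 u v * b1 u v + a2 u v * b2 u v + sf u * (- DD c th).
Proof.
  unfold FF. rewrite Xu_eq, Xv_eq, ip_fr. change (x3f u v) with (Xe u v 2%nat).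
  destruct (fr_Ec (Xe u v) (a1 u v) (a2 u v) (sf u)) as (H1&H2&H3).
  destruct (fr_Ec (Xe u v) (b1 u v) (b2 u v) (- DD c th)) as (H4&H5&H6).
  rewrite H1, H2, H3, H4, H5, H6. ring.
Qed.

Lemma conformal_Xe : conformal (gE2 l1 l2) Xe.
Proof.
  intros u v. rewrite EE_val, GG_val, FF_val. split; [apply alg_EG | apply alg_F].
Qed.

Lemma IIsum u v n : IIe (gE2 l1 l2) Xe u v n + IIg (gE2 l1 l2) Xe u v n = 0.
Proof.
  unfold IIe, IIg. rewrite Xuu_eq, Xu_eq, Xvv_eq, Xv_eq.
  replace (- KK * DD c th) with (KK * (- DD c th)) by ring.
  change (x3f u v) with (Xe u v 2%nat).
  rewrite !cov_frame.
  pose proof (tau1 u v). pose proof (tau2 u v). pose proof (tau3 u v).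
  transitivity ((a1u u v + b1v u v + Gam1 (a1 u v) (a2 u v) (sf u) (a1 u v) (a2 u v) (sf u)
  + Gam1 (b1 u v) (b2 u v) (- DD c th) (b1 u v) (b2 u v) (- DD c th)) * fr1 (Xe u v) n +
  (a2u u v + b2v u v + Gam2 (a1 u v) (a2 u v) (sf u) (a1 u v) (a2 u v) (sf u)
  + Gam2 (b1 u v) (b2 u v) (- DD c th) (b1 u v) (b2 u v) (- DD c th)) * fr2 (Xe u v) n +
  (a3u u + 0 + Gam3 (a1 u v) (a2 u v) (sf u) (a1 u v) (a2 u v) (sf u)
  + Gam3 (b1 u v) (b2 u v) (- DD c th) (b1 u v) (b2 u v) (- DD c th)) * fr3 (Xe u v) n).
  - ring.
  - rewrite H, H0, H1. ring.
Qed.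

Lemma minimal_Xe : minimal (gE2 l1 l2) Xe.
Proof.
  intros u v n _. unfold mean_curv.
  rewrite (proj2 (conformal_Xe u v)). rewrite <- (proj1 (conformal_Xe u v)).
  replace (IIe (gE2 l1 l2) Xe u v n * EE (gE2 l1 l2) Xe u v - 2 * IIf (gE2 l1 l2) Xe u v n * 0 +
     IIg (gE2 l1 l2) Xe u v n * EE (gE2 l1 l2) Xe u v)
   with ((IIe (gE2 l1 l2) Xe u v n + IIg (gE2 l1 l2) Xe u v n) * EE (gE2 l1 l2) Xe u v) by ring.
  rewrite IIsum. unfold Rdiv. ring.
Qed.

Definition Nf u v : vec3 :=
  mk3 (cpf u / chE (ef u v)) (spf u / chE (ef u v)) (- shE (ef u v) / chE (ef u v)).

Lemma chE_pos e : 0 < e -> 0 < chE e.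
Proof. intro. unfold chE. assert (0 < / e) by (apply Rinv_0_lt_compat; lra). lra. Qed.

Lemma frame_comb_Ec x N : frame_comb l1 l2 x N = Ec (x 2%nat) (N 0%nat) (N 1%nat) (N 2%nat).
Proof.
  apply functional_extensionality; intro k. unfold frame_comb, E1, E2, E3, Ec, mk3, KK.
  destruct k as [|[|k]]; simpl; field; nzh.
Qed.

Lemma normal_Xe u v : unit_normal (gE2 l1 l2) Xe u v (frame_comb l1 l2 (Xe u v) (Nf u v)).
Proof.
  rewrite frame_comb_Ec. unfold unit_normal. rewrite Xu_eq, Xv_eq, !ip_fr.
  change (x3f u v) with (Xe u v 2%nat).
  destruct (fr_Ec (Xe u v) (a1 u v) (a2 u v) (sf u)) as (H1&H2&H3).
  destruct (fr_Ec (Xe u v) (b1 u v) (b2 u v) (- DD c th)) as (H4&H5&H6).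
  destruct (fr_Ec (Xe u v) (Nf u v 0%nat) (Nf u v 1%nat) (Nf u v 2%nat)) as (H7&H8&H9).
  rewrite H1, H2, H3, H4, H5, H6, H7, H8, H9.
  unfold Nf, mk3, a1, a2, b1, b2.
  prep_alg2 u v. repeat split; field; nz'.
Qed.

Lemma N3_nz u v : 1 + Nf u v 2%nat <> 0.
Proof.
  unfold Nf, mk3. pose proof (ef_pos u v) as He. pose proof (chE_pos _ He).
  assert (0 < / ef u v) by (apply Rinv_0_lt_compat; lra).
  replace (1 + - shE (ef u v) / chE (ef u v)) with (/ ef u v / chE (ef u v)).
  - apply Rgt_not_eq. apply Rdiv_lt_0_compat; lra.
  - unfold shE, chE in *. field. split; [lra|apply Rgt_not_eq; nra].
Qed.

Lemma gauss_Xe u v :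
  ((RtoC (Nf u v 0%nat) + RtoC (Nf u v 1%nat) * Ci) / RtoC (1 + Nf u v 2%nat))%C
      = (RtoC (exp (f u + c * v)) * (RtoC (cos (phi u)) + RtoC (sin (phi u)) * Ci))%C.
Proof.
  apply cplx. apply N3_nz.
  - fold (ef u v). fold (cpf u). unfold Nf, mk3. pose proof (ef_pos u v) as He.
    pose proof (chE_pos _ He). unfold chE, shE in *. field. split; [lra|apply Rgt_not_eq; nra].
  - fold (ef u v). fold (spf u). unfold Nf, mk3. pose proof (ef_pos u v) as He.
    pose proof (chE_pos _ He). unfold chE, shE in *. field. split; [lra|apply Rgt_not_eq; nra].
Qed.

Inductive Cs : (R -> R -> R) -> Prop :=
| Cs_const a : Cs (fun _ _ => a)
| Cs_v : Cs (fun _ v => v)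
| Cs_phi : Cs (fun u _ => phi u)
| Cs_f : Cs (fun u _ => f u)
| Cs_G : Cs (fun u _ => Gf u)
| Cs_plus h1 h2 : Cs h1 -> Cs h2 -> Cs (fun u v => h1 u v + h2 u v)
| Cs_mult h1 h2 : Cs h1 -> Cs h2 -> Cs (fun u v => h1 u v * h2 u v)
| Cs_opp h : Cs h -> Cs (fun u v => - h u v)
| Cs_pow h n : Cs h -> Cs (fun u v => h u v ^ n)
| Cs_sin h : Cs h -> Cs (fun u v => sin (h u v))
| Cs_cos h : Cs h -> Cs (fun u v => cos (h u v))
| Cs_exp h : Cs h -> Cs (fun u v => exp (h u v))
| Cs_inv h : Cs h -> (forall u v, h u v <> 0) -> Cs (fun u v => / h u v)
| Cs_sqrt h : Cs h -> (forall u v, 0 < h u v) -> Cs (fun u v => sqrt (h u v)).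

Ltac cs := unfold Rminus, Rdiv; first
  [ apply Cs_const | apply Cs_v | apply Cs_phi | apply Cs_f | apply Cs_G
  | apply Cs_plus; cs | apply Cs_mult; cs | apply Cs_opp; cs | apply Cs_pow; cs
  | apply Cs_sin; cs | apply Cs_cos; cs | apply Cs_exp; cs
  | apply Cs_inv; [cs|] | apply Cs_sqrt; [cs|] ].

Definition good (h : R -> R -> R) :=
  (forall u v, ex_derive (fun t => h t v) u) /\ (forall u v, ex_derive (fun t => h u t) v) /\
  (forall u v, continuous (fun p : R * R => h (fst p) (snd p)) (u, v)).

Lemma cont_pow (g : R * R -> R) x n : continuous g x -> continuous (fun p => g p ^ n) x.
Proof.
  intro H. induction n; simpl.
  - apply continuous_const.
  - apply (continuous_mult g (fun p => g p ^ n)); auto.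
Qed.

Lemma cont_R (F : R -> R) (g : R * R -> R) x : continuous g x -> (forall y, ex_derive F y) ->
  continuous (fun p => F (g p)) x.
Proof.
  intros Hg HF. apply (continuous_comp g F); auto.
  apply (ex_derive_continuous (V := R_NormedModule)). apply HF.
Qed.

Lemma pu_ext h k : (forall u v, Derive (fun t => h t v) u = k u v) -> pu h = k.
Proof. intros H. apply functional_extensionality; intro u. apply functional_extensionality; intro v. apply H. Qed.
Lemma pv_ext h k : (forall u v, Derive (fun t => h u t) v = k u v) -> pv h = k.
Proof. intros H. apply functional_extensionality; intro u. apply functional_extensionality; intro v. apply H. Qed.

Lemma ppf_Cs : Cs (fun u _ => ppf u).
Proof. unfold ppf, BB. cs. intros u v. apply Rad_BB. Qed.
Lemma sf_Cs : Cs (fun u _ => sf u).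
Proof.
  unfold sf. apply Cs_mult. apply Cs_plus. apply Cs_const. apply Cs_opp. apply ppf_Cs.
  unfold BB. cs. intros u v. apply Rgt_not_eq, BB_pos.
Qed.

Lemma Cs_good h : Cs h -> good h /\ Cs (pu h) /\ Cs (pv h).
Proof.
  induction 1.
  -
    split; [split; [|split]|split].
    + intros; apply ex_derive_const.
    + intros; apply ex_derive_const.
    + intros; apply continuous_const.
    + rewrite (pu_ext _ (fun _ _ => 0)). apply Cs_const. intros; apply Derive_const.
    + rewrite (pv_ext _ (fun _ _ => 0)). apply Cs_const. intros; apply Derive_const.
  -
    split; [split; [|split]|split].
    + intros; apply ex_derive_const.
    + intros; apply ex_derive_id.
    + intros; apply continuous_snd.
    + rewrite (pu_ext _ (fun _ _ => 0)). apply Cs_const. intros; apply Derive_const.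
    + rewrite (pv_ext _ (fun _ _ => 1)). apply Cs_const. intros; apply Derive_id.
  -
    split; [split; [|split]|split].
    + intros. exists (ppf u). apply dphi.
    + intros; apply ex_derive_const.
    + intros. apply (continuous_comp fst phi). apply continuous_fst.
      apply (ex_derive_continuous (V := R_NormedModule)). exists (ppf u). apply dphi.
    + rewrite (pu_ext _ (fun u _ => ppf u)). apply ppf_Cs. intros; apply Derive_phi'.
    + rewrite (pv_ext _ (fun _ _ => 0)). apply Cs_const. intros; apply Derive_const.
  -
    split; [split; [|split]|split].
    + intros. exists (DD c th * BB l1 l2 phi u). apply Hf.
    + intros; apply ex_derive_const.
    + intros. apply (continuous_comp fst f). apply continuous_fst.
      apply (ex_derive_continuous (V := R_NormedModule)). exists (DD c th * BB l1 l2 phi u). apply Hf.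
    + rewrite (pu_ext _ (fun u _ => DD c th * BB l1 l2 phi u)). unfold BB. cs.
      intros; apply is_derive_unique, Hf.
    + rewrite (pv_ext _ (fun _ _ => 0)). apply Cs_const. intros; apply Derive_const.
  -
    split; [split; [|split]|split].
    + intros. exists (sf u). apply dGf.
    + intros; apply ex_derive_const.
    + intros. apply (continuous_comp fst Gf). apply continuous_fst.
      apply (ex_derive_continuous (V := R_NormedModule)). exists (sf u). apply dGf.
    + rewrite (pu_ext _ (fun u _ => sf u)). apply sf_Cs.
      intros; apply is_derive_unique, dGf.
    + rewrite (pv_ext _ (fun _ _ => 0)). apply Cs_const. intros; apply Derive_const.
  -
    destruct IHCs1 as [[A1 [B1 C1]] [D1 E1]]. destruct IHCs2 as [[A2 [B2 C2]] [D2 E2]].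
    split; [split; [|split]|split].
    + intros. apply (ex_derive_plus (fun t => h1 t v) (fun t => h2 t v)); auto.
    + intros. apply (ex_derive_plus (fun t => h1 u t) (fun t => h2 u t)); auto.
    + intros. apply (continuous_plus (fun p : R*R => h1 (fst p) (snd p)) (fun p : R * R => h2 (fst p) (snd p))); auto.
    + rewrite (pu_ext _ (fun u v => pu h1 u v + pu h2 u v)). apply Cs_plus; auto.
      intros. apply (Derive_plus (fun t => h1 t v) (fun t => h2 t v)); auto.
    + rewrite (pv_ext _ (fun u v => pv h1 u v + pv h2 u v)). apply Cs_plus; auto.
      intros. apply (Derive_plus (fun t => h1 u t) (fun t => h2 u t)); auto.
  -
    destruct IHCs1 as [[A1 [B1 C1]] [D1 E1]]. destruct IHCs2 as [[A2 [B2 C2]] [D2 E2]].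
    split; [split; [|split]|split].
    + intros. apply (ex_derive_mult (fun t => h1 t v) (fun t => h2 t v)); auto.
    + intros. apply (ex_derive_mult (fun t => h1 u t) (fun t => h2 u t)); auto.
    + intros. apply (continuous_mult (fun p : R*R => h1 (fst p) (snd p)) (fun p : R * R => h2 (fst p) (snd p))); auto.
    + rewrite (pu_ext _ (fun u v => pu h1 u v * h2 u v + h1 u v * pu h2 u v)).
      apply Cs_plus; apply Cs_mult; auto.
      intros. apply (Derive_mult (fun t => h1 t v) (fun t => h2 t v)); auto.
    + rewrite (pv_ext _ (fun u v => pv h1 u v * h2 u v + h1 u v * pv h2 u v)).
      apply Cs_plus; apply Cs_mult; auto.
      intros. apply (Derive_mult (fun t => h1 u t) (fun t => h2 u t)); auto.
  -
    destruct IHCs as [[A1 [B1 C1]] [D1 E1]].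
    split; [split; [|split]|split].
    + intros. apply (ex_derive_opp (fun t => h t v)); auto.
    + intros. apply (ex_derive_opp (fun t => h u t)); auto.
    + intros. apply (continuous_opp (fun p : R*R => h (fst p) (snd p))); auto.
    + rewrite (pu_ext _ (fun u v => - pu h u v)). apply Cs_opp; auto.
      intros. apply (Derive_opp (fun t => h t v)).
    + rewrite (pv_ext _ (fun u v => - pv h u v)). apply Cs_opp; auto.
      intros. apply (Derive_opp (fun t => h u t)).
  -
    destruct IHCs as [[A1 [B1 C1]] [D1 E1]].
    split; [split; [|split]|split].
    + intros. apply (ex_derive_pow (fun t => h t v)); auto.
    + intros. apply (ex_derive_pow (fun t => h u t)); auto.
    + intros. apply (cont_pow (fun p : R*R => h (fst p) (snd p))); auto.
    + rewrite (pu_ext _ (fun u v => INR n * pu h u v * h u v ^ Init.Nat.pred n)).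
      apply Cs_mult; [apply Cs_mult; [apply Cs_const|auto]|apply Cs_pow; auto].
      intros. apply (Derive_pow (fun t => h t v)); auto.
    + rewrite (pv_ext _ (fun u v => INR n * pv h u v * h u v ^ Init.Nat.pred n)).
      apply Cs_mult; [apply Cs_mult; [apply Cs_const|auto]|apply Cs_pow; auto].
      intros. apply (Derive_pow (fun t => h u t)); auto.
  -
    destruct IHCs as [[A1 [B1 C1]] [D1 E1]].
    split; [split; [|split]|split].
    + intros. apply (ex_derive_comp sin (fun t => h t v)); auto. apply ex_derive_Reals_1, derivable_pt_sin.
    + intros. apply (ex_derive_comp sin (fun t => h u t)); auto. apply ex_derive_Reals_1, derivable_pt_sin.
    + intros. apply (cont_R sin (fun p : R*R => h (fst p) (snd p))); auto. intros; apply ex_derive_Reals_1, derivable_pt_sin.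
    + rewrite (pu_ext _ (fun u v => pu h u v * cos (h u v))). apply Cs_mult; auto. apply Cs_cos; auto.
      intros. apply is_derive_unique. apply (is_derive_comp sin (fun t => h t v)). apply is_derive_sin.
      apply Derive_correct; auto.
    + rewrite (pv_ext _ (fun u v => pv h u v * cos (h u v))). apply Cs_mult; auto. apply Cs_cos; auto.
      intros. apply is_derive_unique. apply (is_derive_comp sin (fun t => h u t)). apply is_derive_sin.
      apply Derive_correct; auto.
  -
    destruct IHCs as [[A1 [B1 C1]] [D1 E1]].
    split; [split; [|split]|split].
    + intros. apply (ex_derive_comp cos (fun t => h t v)); auto. apply ex_derive_Reals_1, derivable_pt_cos.
    + intros. apply (ex_derive_comp cos (fun t => h u t)); auto. apply ex_derive_Reals_1, derivable_pt_cos.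
    + intros. apply (cont_R cos (fun p : R*R => h (fst p) (snd p))); auto. intros; apply ex_derive_Reals_1, derivable_pt_cos.
    + rewrite (pu_ext _ (fun u v => pu h u v * - sin (h u v))). apply Cs_mult; auto. apply Cs_opp, Cs_sin; auto.
      intros. apply is_derive_unique. apply (is_derive_comp cos (fun t => h t v)). apply is_derive_cos.
      apply Derive_correct; auto.
    + rewrite (pv_ext _ (fun u v => pv h u v * - sin (h u v))). apply Cs_mult; auto. apply Cs_opp, Cs_sin; auto.
      intros. apply is_derive_unique. apply (is_derive_comp cos (fun t => h u t)). apply is_derive_cos.
      apply Derive_correct; auto.
  -
    destruct IHCs as [[A1 [B1 C1]] [D1 E1]].
    split; [split; [|split]|split].
    + intros. apply (ex_derive_comp exp (fun t => h t v)); auto. apply ex_derive_Reals_1, derivable_pt_exp.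
    + intros. apply (ex_derive_comp exp (fun t => h u t)); auto. apply ex_derive_Reals_1, derivable_pt_exp.
    + intros. apply (cont_R exp (fun p : R*R => h (fst p) (snd p))); auto. intros; apply ex_derive_Reals_1, derivable_pt_exp.
    + rewrite (pu_ext _ (fun u v => pu h u v * exp (h u v))). apply Cs_mult; auto. apply Cs_exp; auto.
      intros. apply is_derive_unique. apply (is_derive_comp exp (fun t => h t v)). apply is_derive_exp.
      apply Derive_correct; auto.
    + rewrite (pv_ext _ (fun u v => pv h u v * exp (h u v))). apply Cs_mult; auto. apply Cs_exp; auto.
      intros. apply is_derive_unique. apply (is_derive_comp exp (fun t => h u t)). apply is_derive_exp.
      apply Derive_correct; auto.
  -
    destruct IHCs as [[A1 [B1 C1]] [D1 E1]].
    split; [split; [|split]|split].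
    + intros. exists (- Derive (fun t => h t v) u / h u v ^ 2).
      apply (is_derive_inv (fun t => h t v)); auto. apply Derive_correct; auto.
    + intros. exists (- Derive (fun t => h u t) v / h u v ^ 2).
      apply (is_derive_inv (fun t => h u t)); auto. apply Derive_correct; auto.
    + intros. apply (continuous_comp (fun p : R*R => h (fst p) (snd p)) Rinv); auto.
      apply continuous_Rinv; auto.
    + rewrite (pu_ext _ (fun u v => - pu h u v / h u v ^ 2)).
      unfold Rdiv. apply Cs_mult; [apply Cs_opp; auto | apply Cs_inv; [apply Cs_pow; auto | intros; apply pow_nonzero; auto]].
      intros. apply is_derive_unique. apply (is_derive_inv (fun t => h t v)); auto. apply Derive_correct; auto.
    + rewrite (pv_ext _ (fun u v => - pv h u v / h u v ^ 2)).
      unfold Rdiv. apply Cs_mult; [apply Cs_opp; auto | apply Cs_inv; [apply Cs_pow; auto | intros; apply pow_nonzero; auto]].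
      intros. apply is_derive_unique. apply (is_derive_inv (fun t => h u t)); auto. apply Derive_correct; auto.
  -
    destruct IHCs as [[A1 [B1 C1]] [D1 E1]].
    assert (Hnz : forall u v, 2 * sqrt (h u v) <> 0).
    { intros. apply Rgt_not_eq. assert (0 < sqrt (h u v)) by (apply sqrt_lt_R0; auto). lra. }
    split; [split; [|split]|split].
    + intros. exists (Derive (fun t => h t v) u / (2 * sqrt (h u v))).
      apply (is_derive_sqrt (fun t => h t v)); auto. apply Derive_correct; auto.
    + intros. exists (Derive (fun t => h u t) v / (2 * sqrt (h u v))).
      apply (is_derive_sqrt (fun t => h u t)); auto. apply Derive_correct; auto.
    + intros. apply (continuous_comp (fun p : R*R => h (fst p) (snd p)) sqrt); auto.
      apply continuous_sqrt.
    + rewrite (pu_ext _ (fun u v => pu h u v / (2 * sqrt (h u v)))).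
      unfold Rdiv. apply Cs_mult; auto. apply Cs_inv; auto. apply Cs_mult; [apply Cs_const|apply Cs_sqrt; auto].
      intros. apply is_derive_unique. apply (is_derive_sqrt (fun t => h t v)); auto. apply Derive_correct; auto.
    + rewrite (pv_ext _ (fun u v => pv h u v / (2 * sqrt (h u v)))).
      unfold Rdiv. apply Cs_mult; auto. apply Cs_inv; auto. apply Cs_mult; [apply Cs_const|apply Cs_sqrt; auto].
      intros. apply is_derive_unique. apply (is_derive_sqrt (fun t => h u t)); auto. apply Derive_correct; auto.
Qed.

Lemma Cs_iter w h : Cs h -> Cs (iterp w h).
Proof.
  intro H. induction w as [|b w IH]; simpl; auto.
  destruct b; apply (Cs_good _ IH).
Qed.

Lemma Cs_smooth h : Cs h -> smooth2 h.
Proof.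
  intros H w u v. destruct (Cs_good _ (Cs_iter w h H)) as [[A [B C]] _].
  split; [apply A|split; [apply B|apply C]].
Qed.

Ltac cs2 := unfold Rminus, Rdiv; first
  [ apply Cs_const | apply Cs_v | apply Cs_phi | apply Cs_f | apply Cs_G | apply sf_Cs
  | apply Cs_plus; cs2 | apply Cs_mult; cs2 | apply Cs_opp; cs2 | apply Cs_pow; cs2
  | apply Cs_sin; cs2 | apply Cs_cos; cs2 | apply Cs_exp; cs2
  | apply Cs_inv; [cs2|] | apply Cs_sqrt; [cs2|] ].

Lemma Cs_X k : Cs (Defs.comp Xe k).
Proof.
  unfold Defs.comp, Xe, x3f, W1, W2, FW1, FW2, FV1, FV2, chE, shE, Bof, cpf, spf, ef, Lam, KK.
  destruct k as [|[|k]]; simpl; cs2;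
   try (intros; apply Rgt_not_eq, exp_pos);
   try (intros u _; apply Rgt_not_eq;
        apply (Rlt_le_trans _ _ _ (Rmult_lt_0_compat _ _ Lam_pos (BB_pos u))); right;
        unfold Lam, KK, BB; ring).
Qed.

Lemma Ds_pos u : 0 < DD c th ^ 2 + sf u ^ 2.
Proof.
  assert (H1 : 0 <= DD c th ^ 2) by apply pow2_ge_0.
  assert (H2 : 0 <= sf u ^ 2) by apply pow2_ge_0.
  destruct (Req_dec (DD c th) 0) as [HD|HD].
  - destruct (Req_dec (sf u) 0) as [HS|HS].
    + exfalso. pose proof (ppf_sq u) as Hq. pose proof (ppf_eq u) as He.
      rewrite HS in He. rewrite HD in Hq.
      assert (Hp : ppf u = c) by (rewrite He; ring).
      rewrite Hp in Hq. pose proof (BB_pos u) as HB.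
      assert (Hcos : cos th = 0).
      { assert (cos th * BB l1 l2 phi u = 0) by nra.
        destruct (Rmult_integral _ _ H) as [H'|H']; auto. lra. }
      unfold DD in HD. assert (Hsin : sin th = 0).
      { apply (Rmult_eq_reg_r (/ c)). rewrite Rmult_0_l. exact HD.
        apply Rinv_neq_0_compat; lra. }
      pose proof (circ_t th). rewrite Hcos, Hsin in H. lra.
    + assert (0 < sf u ^ 2) by (apply pow2_gt_0; auto). lra.
  - assert (0 < DD c th ^ 2) by (apply pow2_gt_0; auto). lra.
Qed.

Lemma E_pos u v : 0 < a1 u v ^ 2 + a2 u v ^ 2 + sf u ^ 2.
Proof.
  rewrite alg_E. apply Rmult_lt_0_compat.
  - apply pow_lt, chE_pos, ef_pos.
  - apply Ds_pos.
Qed.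

Lemma indep u v al be :
  (forall k, (k < 3)%nat -> al * Xu Xe u v k + be * Xv Xe u v k = 0) -> al = 0 /\ be = 0.
Proof.
  intros H. rewrite Xu_eq, Xv_eq in H.
  assert (H0 := H 0%nat ltac:(auto)). assert (H1 := H 1%nat ltac:(auto)). assert (H2 := H 2%nat ltac:(auto)).
  clear H. unfold Ec, mk3 in H0, H1, H2.
  pose proof (alg_F u v) as HF. pose proof (alg_EG u v) as HEG. pose proof (E_pos u v) as HE.
  set (t := x3f u v) in *. set (s := sf u) in *. set (A1 := a1 u v) in *. set (A2 := a2 u v) in *.
  set (B1 := b1 u v) in *. set (B2 := b2 u v) in *. clearbody t s A1 A2 B1 B2.
  assert (E1 : al * A1 + be * B1 = l1 * (cos t * (al * (cos t * A1 / l1 - sin t * A2 / l2) + be * (cos t * B1 / l1 - sin t * B2 / l2)) + sin t * (al * (sin t * A1 / l1 + cos t * A2 / l2) + be * (sin t * B1 / l1 + cos t * B2 / l2)))).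
  { clear H0 H1 H2. circ_th t. field. nz. }
  assert (E2 : al * A2 + be * B2 = l2 * (- sin t * (al * (cos t * A1 / l1 - sin t * A2 / l2) + be * (cos t * B1 / l1 - sin t * B2 / l2)) + cos t * (al * (sin t * A1 / l1 + cos t * A2 / l2) + be * (sin t * B1 / l1 + cos t * B2 / l2)))).
  { clear H0 H1 H2. circ_th t. field. nz. }
  rewrite H0, H1 in E1, E2.
  assert (E3 : al * s + be * (- DD c th) = 0).
  { apply (Rmult_eq_reg_l KK). transitivity (al * (KK * s) + be * (KK * - DD c th)). ring. rewrite H2. ring. unfold KK. apply Rgt_not_eq. apply Rmult_lt_0_compat; lra. }
  assert (Ha : al * (A1 ^ 2 + A2 ^ 2 + s ^ 2) = 0).
  { replace (al * (A1 ^ 2 + A2 ^ 2 + s ^ 2)) with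
      (A1 * (al * A1 + be * B1) + A2 * (al * A2 + be * B2) + s * (al * s + be * (- DD c th)) - be * (A1 * B1 + A2 * B2 + s * (- DD c th))) by ring.
    rewrite E1, E2, E3, HF. ring. }
  assert (Hb : be * (B1 ^ 2 + B2 ^ 2 + (- DD c th) ^ 2) = 0).
  { replace (be * (B1 ^ 2 + B2 ^ 2 + (- DD c th) ^ 2)) with
      (B1 * (al * A1 + be * B1) + B2 * (al * A2 + be * B2) + (- DD c th) * (al * s + be * (- DD c th)) - al * (A1 * B1 + A2 * B2 + s * (- DD c th))) by ring.
    rewrite E1, E2, E3, HF. ring. }
  rewrite <- HEG in Hb.
  split.
  - destruct (Rmult_integral _ _ Ha); auto. lra.
  - destruct (Rmult_integral _ _ Hb); auto. lra.
Qed.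

Lemma main_sec : let X := Xsurf l1 l2 c th phi f in
  immersion X /\ conformal (gE2 l1 l2) X /\ minimal (gE2 l1 l2) X /\
  exists N : R -> R -> vec3,
    forall u v,
      unit_normal (gE2 l1 l2) X u v (frame_comb l1 l2 (X u v) (N u v)) /\
      1 + N u v 2%nat <> 0 /\
      ((RtoC (N u v 0%nat) + RtoC (N u v 1%nat) * Ci) / RtoC (1 + N u v 2%nat))%C
      = (RtoC (exp (f u + c * v)) * (RtoC (cos (phi u)) + RtoC (sin (phi u)) * Ci))%C.
Proof.
  intro X. unfold X. rewrite Xsurf_eq.
  split; [|split; [|split]].
  - split.
    + intros k _. apply Cs_smooth, Cs_X.
    + intros u v a b H. apply (indep u v a b H).
  - apply conformal_Xe.
  - apply minimal_Xe.
  - exists Nf. intros u v. split; [apply normal_Xe|split; [apply N3_nz|apply gauss_Xe]].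
Qed.
End Main.

Lemma omega_ct l1 c th : 0 < l1 -> in_Omega l1 c th -> l1 ^ 2 * (1 - cos th) < c ^ 2.
Proof.
  intros Hl [Hc Hth]. unfold theta_plus in Hth.
  destruct (Rlt_dec (sqrt 2 * l1) c) as [Hlt|Hge].
  - assert (Hs : 0 <= sqrt 2) by apply sqrt_pos.
    assert (Hsq : sqrt 2 * sqrt 2 = 2) by (apply sqrt_sqrt; lra).
    assert (0 <= sqrt 2 * l1) by nra.
    assert (2 * l1 ^ 2 < c ^ 2).
    { replace (2 * l1 ^ 2) with ((sqrt 2 * l1) ^ 2) by (simpl; nra). simpl. nra. }
    pose proof (COS_bound th) as [Hc1 Hc2].
    assert (l1 ^ 2 * (1 - cos th) <= 2 * l1 ^ 2).
    { assert (0 < l1 ^ 2) by (apply pow_lt; lra). nra. }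
    lra.
  - apply Rnot_lt_le in Hge.
    set (y := 1 - c ^ 2 / l1 ^ 2) in *.
    assert (Hl2 : 0 < l1 ^ 2) by (apply pow_lt; lra).
    assert (Hs : 0 <= sqrt 2) by apply sqrt_pos.
    assert (Hsq : sqrt 2 * sqrt 2 = 2) by (apply sqrt_sqrt; lra).
    assert (Hc2 : c ^ 2 <= 2 * l1 ^ 2).
    { replace (2 * l1 ^ 2) with ((sqrt 2 * l1) ^ 2) by (simpl; nra). simpl. nra. }
    assert (Hy1 : -1 <= y).
    { unfold y. assert (c ^ 2 / l1 ^ 2 <= 2).
      { apply (Rmult_le_reg_r (l1 ^ 2)); auto. unfold Rdiv. rewrite Rmult_assoc, Rinv_l; lra. }
      lra. }
    assert (Hy2 : y <= 1).
    { unfold y. assert (0 <= c ^ 2 / l1 ^ 2) by (apply Rdiv_le_0_compat; [apply pow2_ge_0|lra]). lra. }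
    pose proof (acos_bound y) as [Ha1 Ha2].
    assert (Hcy : cos (acos y) = y) by (apply cos_acos; lra).
    assert (Hcos : y < cos th).
    { destruct (Rle_lt_dec 0 th) as [Hp|Hn].
      - rewrite <- Hcy. apply cos_decreasing_1; lra.
      - rewrite <- cos_neg. rewrite <- Hcy. apply cos_decreasing_1; lra. }
    unfold y in Hcos.
    assert (Hk : l1 ^ 2 * (c ^ 2 / l1 ^ 2) = c ^ 2) by (field; lra).
    nra.
Qed.

Theorem theorem5p1 (l1 l2 c th : R) (phi f : R -> R) :
  ((l1 > l2 /\ l2 > 0) \/ (l1 = 1 /\ l2 = 1)) ->
  in_Omega l1 c th ->
  (forall u, is_derive phi u
     (sqrt (c ^ 2 + 2 * cos th * BB l1 l2 phi u - DD c th ^ 2 * BB l1 l2 phi u ^ 2))) ->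
  phi 0 = 0 ->
  (forall u, is_derive f u (DD c th * BB l1 l2 phi u)) ->
  f 0 = 0 ->
  let X := Xsurf l1 l2 c th phi f in
  immersion X /\ conformal (gE2 l1 l2) X /\ minimal (gE2 l1 l2) X /\
  exists N : R -> R -> vec3,
    forall u v,
      unit_normal (gE2 l1 l2) X u v (frame_comb l1 l2 (X u v) (N u v)) /\
      1 + N u v 2%nat <> 0 /\
      ((RtoC (N u v 0%nat) + RtoC (N u v 1%nat) * Ci) / RtoC (1 + N u v 2%nat))%C
      = (RtoC (exp (f u + c * v)) * (RtoC (cos (phi u)) + RtoC (sin (phi u)) * Ci))%C.
Proof.
  intros Hl HO Hphi _ Hf _.
  assert (Hl1 : 0 < l1) by (destruct Hl as [[? ?]|[? ?]]; lra).
  assert (Hl2 : 0 < l2) by (destruct Hl as [[? ?]|[? ?]]; lra).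
  assert (Hl12 : l2 <= l1) by (destruct Hl as [[? ?]|[? ?]]; lra).
  assert (Hc : 0 < c) by (destruct HO; auto).
  assert (Hct : l1 ^ 2 * (1 - cos th) < c ^ 2) by (apply omega_ct; auto).
  apply main_sec; auto.
Qed.
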